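(* Let $X$ be a real linear space and $\phi\colon X\times X\to\mathbb{R}$ a biadditive functional such that $\phi(z_0,z_0)<0$ for some $z_0\in X$. Then there is no function $f\colon X\to\mathbb{R}$ satisfying $f(x+y)=f(x)f(y)-\phi(x,y)$ for all $x,y\in X$.
   Context: A map $\phi\colon X\times X\to\mathbb{R}$ is biadditive if it is additive in each variable separately (no homogeneity assumed). *)

(* Defs.v *)
From mathcomp Require Import all_boot all_order all_algebra.
From mathcomp Require Import Rstruct.
Set Implicit Arguments. Unset Strict Implicit. Unset Printing Implicit Defensive.
Import GRing.Theory.
Local Open Scope ring_scope.

Notation RR := Rdefinitions.R.

Definition biadditive (X : lmodType RR) (phi : X -> X -> RR) : Prop :=
  (forall x1 x2 y, phi (x1 + x2) y = phi x1 y + phi x2 y) /\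
  (forall x y1 y2, phi x (y1 + y2) = phi x y1 + phi x y2).

(* Main.v *)
Require Import Defs.
From mathcomp Require Import all_boot all_order all_algebra.
From mathcomp Require Import Rstruct.
From mathcomp Require Import ring lra.
Import GRing.Theory Num.Theory.
Local Open Scope ring_scope.

Lemma helper (a t : RR) : a < 0 ->
  (t * t - a) * (t * t - a) - (a + a + (a + a)) =
  ((t * t - a) * t - (a + a)) * t - (a + a + a) -> False.
Proof.
move=> ha H.
have K : a * ((t - 1) ^+ 2 - a) = 0.
  have -> : a * ((t - 1) ^+ 2 - a) =
    (((t * t - a) * t - (a + a)) * t - (a + a + a)) -
    ((t * t - a) * (t * t - a) - (a + a + (a + a))) by ring.
  by rewrite H subrr.
move/eqP: K; rewrite mulf_eq0 => /orP [/eqP Ha|/eqP Hb].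
  by move: ha; rewrite Ha Order.POrderTheory.ltxx.
have : 0 <= (t - 1) ^+ 2 by apply: sqr_ge0.
lra.
Qed.

Theorem corollary1 (X : lmodType RR) (phi : X -> X -> RR)
  (hphi : biadditive phi) (z0 : X) (hz0 : phi z0 z0 < 0) :
  ~ exists f : X -> RR, forall x y : X, f (x + y) = f x * f y - phi x y.
Proof.
case=> f Hf; case: hphi => HL HR.
set u := z0 + z0; set v := u + z0.
have H1 := Hf z0 z0; have H2 := Hf u z0; have H3 := Hf v z0; have H4 := Hf u u.
have E : v + z0 = u + u by rewrite /v /u !addrA.
rewrite E in H3.
have P2 : phi u z0 = phi z0 z0 + phi z0 z0 by rewrite /u HL.
have P3 : phi v z0 = phi z0 z0 + phi z0 z0 + phi z0 z0 by rewrite /v HL P2.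
have P4 : phi u u = phi z0 z0 + phi z0 z0 + (phi z0 z0 + phi z0 z0)
  by rewrite /u !HR !HL.
rewrite -/u in H1; rewrite -/v in H2.
rewrite P2 in H2; rewrite P3 in H3; rewrite P4 in H4.
rewrite H4 H2 H1 in H3.
move: H3; apply: helper hz0.
Qed.
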